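(* Let $X\in\mathbf{M}_{2N}(\mathbb{C})$ satisfy $X^{*}=X^{\sharp}$. Then there exist a unitary $U$ and a positive semidefinite $P$ in $\mathbf{M}_{2N}(\mathbb{C})$ with $U^{*}=U^{\sharp}$, $P^{*}=P^{\sharp}$ and $X=UP$.
   Context: For $X\in\mathbf{M}_{2N}(\mathbb{C})$ in $N\times N$ blocks $X=\begin{bmatrix}A&B\\C&D\end{bmatrix}$, the dual operation is $X^{\sharp}=\begin{bmatrix}D^{\mathrm T}&-B^{\mathrm T}\\-C^{\mathrm T}&A^{\mathrm T}\end{bmatrix}$. *)

(* Defs.v *)
From HB Require Import structures.
From mathcomp Require Import all_boot all_order all_algebra.
From mathcomp Require Import complex.
From mathcomp Require Import reals.
Set Implicit Arguments. Unset Strict Implicit. Unset Printing Implicit Defensive.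
Import Order.TTheory GRing.Theory Num.Theory.
Local Open Scope ring_scope.

Definition adj {C : numClosedFieldType} {m n : nat} (X : 'M[C]_(m, n)) : 'M[C]_(n, m) :=
  (map_mx Num.conj X)^T.

Definition sharp {C : numClosedFieldType} {N : nat} (X : 'M[C]_(N + N)) : 'M[C]_(N + N) :=
  block_mx (drsubmx X)^T (- (ursubmx X)^T) (- (dlsubmx X)^T) (ulsubmx X)^T.

Definition unitary_mx {C : numClosedFieldType} {n : nat} (U : 'M[C]_n) : Prop :=
  adj U *m U = 1%:M /\ U *m adj U = 1%:M.

Definition psd_mx {C : numClosedFieldType} {n : nat} (P : 'M[C]_n) : Prop :=
  adj P = P /\ forall v : 'cV[C]_n, 0 <= (adj v *m P *m v) 0 0.

(* Main.v *)
Require Import Defs.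
From HB Require Import structures.
From mathcomp Require Import all_boot all_order all_algebra.
From mathcomp Require Import complex.
From mathcomp Require Import reals.
Import GRing.Theory Num.Theory.
Local Open Scope ring_scope.
Set Implicit Arguments. Unset Strict Implicit. Unset Printing Implicit Defensive.

Section Basics.
Variable C : numClosedFieldType.

Definition cj {m p} (M : 'M[C]_(m,p)) : 'M[C]_(m,p) := map_mx Num.conj M.

Lemma cjM m p q (A : 'M[C]_(m,p)) (B : 'M[C]_(p,q)) : cj (A *m B) = cj A *m cj B.
Proof. exact: map_mxM. Qed.
Lemma cjK m p (A : 'M[C]_(m,p)) : cj (cj A) = A.
Proof. by apply/matrixP=> i j; rewrite !mxE conjCK. Qed.
Lemma cjT m p (A : 'M[C]_(m,p)) : cj (A^T) = (cj A)^T.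
Proof. by apply/matrixP=> i j; rewrite !mxE. Qed.
Lemma cjD m p (A B : 'M[C]_(m,p)) : cj (A + B) = cj A + cj B.
Proof. by apply/matrixP=> i j; rewrite !mxE rmorphD. Qed.
Lemma cjN m p (A : 'M[C]_(m,p)) : cj (- A) = - cj A.
Proof. by apply/matrixP=> i j; rewrite !mxE rmorphN. Qed.
Lemma cjZ m p a (A : 'M[C]_(m,p)) : cj (a *: A) = a^* *: cj A.
Proof. by apply/matrixP=> i j; rewrite !mxE rmorphM. Qed.
Lemma cj0 m p : cj (0 : 'M[C]_(m,p)) = 0.
Proof. by apply/matrixP=> i j; rewrite !mxE rmorph0. Qed.
Lemma cj1 m : cj (1%:M : 'M[C]_m) = 1%:M.
Proof. by apply/matrixP=> i j; rewrite !mxE rmorph_nat. Qed.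
Lemma cj_delta m p i j : cj (delta_mx i j : 'M[C]_(m,p)) = delta_mx i j.
Proof. by apply/matrixP=> a b; rewrite !mxE rmorph_nat. Qed.

Lemma hadjE m p (A : 'M[C]_(m,p)) : adj A = (cj A)^T. Proof. by []. Qed.
Lemma hadjM m p q (A : 'M[C]_(m,p)) (B : 'M[C]_(p,q)) : adj (A *m B) = adj B *m adj A.
Proof. by rewrite !hadjE cjM trmx_mul. Qed.
Lemma hadjK m p (A : 'M[C]_(m,p)) : adj (adj A) = A.
Proof. by rewrite !hadjE cjT cjK trmxK. Qed.
Lemma hadjD m p (A B : 'M[C]_(m,p)) : adj (A + B) = adj A + adj B.
Proof. by rewrite !hadjE cjD linearD. Qed.
Lemma hadjN m p (A : 'M[C]_(m,p)) : adj (- A) = - adj A.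
Proof. by rewrite !hadjE cjN linearN. Qed.
Lemma hadjZ m p a (A : 'M[C]_(m,p)) : adj (a *: A) = a^* *: adj A.
Proof. by rewrite !hadjE cjZ linearZ. Qed.
Lemma hadj0 m p : adj (0 : 'M[C]_(m,p)) = 0.
Proof. by rewrite hadjE cj0 trmx0. Qed.
Lemma hadj1 m : adj (1%:M : 'M[C]_m) = 1%:M.
Proof. by rewrite hadjE cj1 trmx1. Qed.
Lemma hadj_entry m p (A : 'M[C]_(m,p)) i j : adj A i j = (A j i)^*.
Proof. by rewrite !mxE. Qed.

Lemma dot_ge0 m (u : 'cV[C]_m) : 0 <= (adj u *m u) 0 0.
Proof.
rewrite mxE; apply: sumr_ge0 => k _; rewrite !mxE mulrC; exact: mul_conjC_ge0.
Qed.

Lemma dot_eq0 m (u : 'cV[C]_m) : (adj u *m u) 0 0 = 0 -> u = 0.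
Proof.
rewrite mxE => /eqP; rewrite psumr_eq0; last first.
  by move=> k _; rewrite !mxE mulrC mul_conjC_ge0.
move=> /allP H; apply/matrixP=> k l; rewrite ord1 mxE.
have := H k (mem_index_enum k); rewrite !mxE /= -normCKC sqrf_eq0 normr_eq0.
by move/eqP.
Qed.

Lemma hadjMM0 m p (Z : 'M[C]_(m,p)) : adj Z *m Z = 0 -> Z = 0.
Proof.
move=> H; apply/matrixP=> a b.
have : col b Z = 0.
  apply: dot_eq0; rewrite !colE hadjM -mulmxA (mulmxA (adj Z)) H.
  idtac.
  by rewrite mul0mx mulmx0 mxE.
by move/matrixP/(_ a 0); rewrite !mxE.
Qed.


Section JSec.
Variable N : nat.
Local Notation n := (N + N)%N.

Definition J : 'M[C]_n := block_mx 0 1%:M (-1%:M) 0.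

Lemma cjJ : cj J = J.
Proof. by rewrite /J /cj map_block_mx -/(cj _) -/(cj _) -/(cj _) -/(cj _) cjN cj0 cj1. Qed.

Lemma trJ : J^T = - J.
Proof. by rewrite /J tr_block_mx !trmx0 trmx1 linearN /= trmx1 opp_block_mx !oppr0 opprK. Qed.

Lemma JJ : J *m J = - 1%:M.
Proof.
rewrite /J mulmx_block !mulmx0 !mul0mx !add0r !addr0 mulmx1 mul1mx.
by rewrite (scalar_mx_block N N 1) opp_block_mx !oppr0. Qed.

Lemma JtJ : J^T *m J = 1%:M.
Proof. by rewrite trJ mulNmx JJ opprK. Qed.
Lemma JJt : J *m J^T = 1%:M.
Proof. by rewrite trJ mulmxN JJ opprK. Qed.
Lemma hadjJ : adj J = J^T.
Proof. by rewrite hadjE cjJ. Qed.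
Lemma cjJt : cj J^T = J^T.
Proof. by rewrite cjT cjJ. Qed.

Lemma sharpE (Y : 'M[C]_n) : sharp Y = J *m Y^T *m J^T.
Proof.
rewrite /sharp; set a := ulsubmx Y; set b := ursubmx Y; set c := dlsubmx Y.
set d := drsubmx Y; rewrite -[Y]submxK -/a -/b -/c -/d.
rewrite tr_block_mx trJ /J opp_block_mx !oppr0 opprK.
rewrite !mulmx_block !mulmx0 !mul0mx !addr0 !add0r !mulmx1 !mul1mx.
by rewrite !mulNmx !mulmxN !mulmx1 !mul1mx opprK.
Qed.

Definition phi (M : 'M[C]_n) : 'M[C]_n := J *m cj M *m J^T.

Lemma fixE (M : 'M[C]_n) : adj M = sharp M <-> phi M = M.
Proof.
rewrite sharpE hadjE; split => H.
  have : cj M = J *m M *m J^T.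
    by rewrite -[cj M]trmxK H !trmx_mul !trmxK mulmxA.
  by move/(congr1 cj); rewrite cjK !cjM cjJ cjJt /phi => <-.
by rewrite -{1}H /phi !cjM cjK cjJ cjJt !trmx_mul trmxK mulmxA.
Qed.

Lemma phiM (A B : 'M[C]_n) : phi (A *m B) = phi A *m phi B.
Proof.
rewrite /phi cjM !mulmxA; congr (_ *m _).
by rewrite -!mulmxA (mulmxA J^T) JtJ mul1mx.
Qed.

Lemma phi_adj (A : 'M[C]_n) : phi (adj A) = adj (phi A).
Proof.
rewrite /phi !hadjM hadjJ hadjE cjT cjK; rewrite [adj (cj A)]hadjE cjK [adj J^T]hadjE cjJt trmxK mulmxA.
by [].
Qed.

Definition sigma {k} (M : 'M[C]_(n, k)) : 'M[C]_(n, k) := J^T *m cj M.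

Lemma sigmaM k l (M : 'M[C]_(n, k)) (D : 'M[C]_(k, l)) : sigma (M *m D) = sigma M *m cj D.
Proof. by rewrite /sigma cjM mulmxA. Qed.

Lemma Asigma k (A : 'M[C]_n) (M : 'M[C]_(n,k)) : phi A = A -> A *m sigma M = sigma (A *m M).
Proof.
move=> hA; have E : A *m J^T = J^T *m cj A.
  rewrite -{1}hA /phi -!mulmxA (_ : J^T *m J^T = - 1%:M); last by rewrite trJ mulNmx mulmxN opprK JJ.
  by rewrite mulmxN mulmx1 mulmxN trJ mulNmx.
by rewrite /sigma cjM !mulmxA E.
Qed.

Lemma hadj_sigma k (M : 'M[C]_(n,k)) : adj (sigma M) = M^T *m J.
Proof. by rewrite /sigma hadjM hadjE cjK [adj J^T]hadjE cjJt trmxK. Qed.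

Definition VV (K : 'M[C]_(n, N)) : 'M[C]_n := row_mx K (sigma K).

Lemma phiVV K : phi (VV K) = VV K.
Proof.
have H : J *m cj (VV K) = VV K *m J.
  rewrite /VV /cj map_row_mx -!/(cj _) mul_mx_row /J mul_row_block.
  rewrite !mulmx0 !add0r !addr0 mulmx1 mulmxN mulmx1 /sigma cjM cjK cjJt.
  rewrite mulmxA -/J JJt mul1mx; congr row_mx.
  by rewrite trJ mulNmx opprK.
by rewrite /phi H -mulmxA JJt mulmx1.
Qed.

End JSec.
End Basics.



Section Compl.
Variable C : numClosedFieldType.
Variable N : nat.
Local Notation n := (N + N)%N.
Local Notation J := (@J C N).

Definition ES (S : {set 'I_N}) : 'M[C]_N := diag_mx (\row_i (i \in S)%:R).

Definition okS S (G : 'M[C]_(n, N)) :=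
  [/\ G *m ES S = G, adj G *m G = ES S & G^T *m J *m G = 0].

Lemma ES_setT : ES setT = 1%:M.
Proof. by apply/matrixP=> i j; rewrite !mxE in_setT. Qed.

Lemma ES_U1 (j : 'I_N) (S : {set 'I_N}) : j \notin S -> ES (j |: S) = ES S + delta_mx j j.
Proof.
move=> jS; apply/matrixP=> a b; rewrite !mxE in_setU1.
case: (eqVneq a b) => [<-|ab].
  rewrite !mulr1n andbb; case: (eqVneq a j) => [->|aj] /=; first by rewrite (negPf jS) add0r.
  by rewrite addr0.
rewrite !mulr0n add0r; case: (eqVneq a j) => [aj|] //=.
by rewrite -aj eq_sym (negPf ab).
Qed.

Lemma delta_ES (j : 'I_N) (S : {set 'I_N}) : j \notin S -> (delta_mx 0 j : 'M[C]_(1, N)) *m ES S = 0.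
Proof.
move=> jS; apply/matrixP=> a b; rewrite mul_mx_diag !mxE.
by case: (eqVneq b j) => [->|bj]; rewrite ?(negPf jS) ?mulr0 // andbF mul0r.
Qed.

Lemma ES_sub (S S' : {set 'I_N}) : S \subset S' -> ES S' *m ES S = ES S.
Proof.
move=> sub; apply/matrixP=> a b; rewrite mul_mx_diag !mxE.
case: (eqVneq a b) => [->|ab]; last by rewrite !mulr0n mul0r.
by case: (boolP (b \in S)) => bS; rewrite ?mulr0 // (subsetP sub _ bS) !mulr1.
Qed.

Lemma col_zero (S : {set 'I_N}) (G : 'M[C]_(n, N)) j : G *m ES S = G -> j \notin S -> col j G = 0.
Proof.
by move=> HG jS; apply/matrixP=> a b; rewrite -HG mul_mx_diag !mxE (negPf jS) mulr0.
Qed.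

Lemma antisym (v : 'cV[C]_n) : v^T *m J *m v = 0.
Proof.
set M := v^T *m J *m v.
have E1 : M^T = M by rewrite [M]mx11_scalar tr_scalar_mx.
have E2 : M^T = - M by rewrite /M !trmx_mul trmxK trJ mulmxA mulmxN mulNmx.
apply/matrixP=> a b; rewrite !ord1 [RHS]mxE.
have := congr1 (fun A : 'M[C]_1 => A 0 0) (etrans (esym E1) E2).
rewrite /= [X in _ = X]mxE => /eqP; rewrite -addr_eq0 -mulr2n mulrn_eq0 /=.
by move/eqP.
Qed.

Lemma trD m p (A B : 'M[C]_(m,p)) : (A + B)^T = A^T + B^T.
Proof. by apply/matrixP=> a b; rewrite !mxE. Qed.

Lemma hadj_delta m p (i : 'I_m) (j : 'I_p) : adj (delta_mx i j : 'M[C]_(m,p)) = delta_mx j i.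
Proof. by rewrite hadjE cj_delta trmx_delta. Qed.

Lemma step (S : {set 'I_N}) (G : 'M[C]_(n, N)) j (v : 'cV[C]_n) :
  okS S G -> j \notin S -> adj v *m v = 1%:M -> adj G *m v = 0 -> G^T *m J *m v = 0 ->
  [/\ okS (j |: S) (G + v *m delta_mx 0 j), (G + v *m delta_mx 0 j) *m ES S = G,
      col j (G + v *m delta_mx 0 j) = v &
      forall i, i != j -> col i (G + v *m delta_mx 0 j) = col i G].
Proof.
move=> [HE HA HS] jS vv Gv GJv.
have Gd : G *m delta_mx j j = 0.
  rewrite -HE -mulmxA (_ : ES S *m _ = 0) ?mulmx0 //.
  apply/matrixP=> a b; rewrite mul_diag_mx !mxE.
  by case: (eqVneq a j) => [->|aj]; rewrite ?(negPf jS) ?mul0r //= mulr0.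
have vG : adj v *m G = 0 by rewrite -[adj v *m G]hadjK hadjM hadjK Gv hadj0.
have vJG : v^T *m J *m G = 0.
  rewrite (_ : v^T *m J *m G = (G^T *m J^T *m v)^T); last by rewrite !trmx_mul !trmxK mulmxA.
  by rewrite trJ mulmxN mulNmx GJv oppr0 trmx0.
split.
- split.
    rewrite ES_U1 // mulmxDl !mulmxDr HE Gd (addr0 G) -!mulmxA delta_ES // mulmx0 add0r.
    by rewrite mul_delta_mx.
    rewrite hadjD hadjM hadj_delta ES_U1 // mulmxDl !mulmxDr HA mulmxA Gv -mulmxA vG mul0mx mulmx0 !addr0.
    by rewrite [0 + _]add0r -mulmxA (mulmxA (adj v)) vv mul1mx mul_delta_mx.
    rewrite trD trmx_mul trmx_delta !mulmxDl !mulmxDr HS mulmxA GJv mul0mx [0 + _]add0r.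
    have T1 : delta_mx j 0 *m v^T *m J *m G = 0 by rewrite -!mulmxA (mulmxA v^T) vJG mulmx0.
    have T2 : delta_mx j 0 *m v^T *m J *m (v *m delta_mx 0 j) = 0.
      by rewrite !mulmxA -(mulmxA (delta_mx j 0)) -(mulmxA (delta_mx j 0)) antisym mulmx0 mul0mx.
    by rewrite T1 T2 [0 + _]add0r [0 + _]add0r.
- by rewrite mulmxDl -mulmxA delta_ES // mulmx0 addr0.
- rewrite !colE mulmxDl -colE (col_zero HE jS) [0 + _]add0r -mulmxA.
  rewrite (_ : delta_mx 0 j *m delta_mx j 0 = 1%:M) ?mulmx1 // mul_delta_mx.
  by apply/matrixP=> a b; rewrite !ord1 !mxE.
- move=> i ij; rewrite !colE mulmxDl -mulmxA mul_delta_mx_0 ?mulmx0 ?(addr0 (G *m _)) //.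
  by rewrite eq_sym.
Qed.


Lemma complete (good : 'cV[C]_n -> Prop) :
  (forall (S : {set 'I_N}) (G : 'M[C]_(n, N)), S != setT -> okS S G ->
     (forall i, i \in S -> good (col i G)) ->
     exists v : 'cV[C]_n, [/\ adj v *m v = 1%:M, adj G *m v = 0, G^T *m J *m v = 0 & good v]) ->
  forall (S : {set 'I_N}) (G : 'M[C]_(n, N)), okS S G -> (forall i, i \in S -> good (col i G)) ->
  exists H : 'M[C]_(n, N), [/\ H *m ES S = G, okS setT H & forall i, good (col i H)].
Proof.
move=> hstep S G; have [k] := ubnP #|~: S|; elim: k S G => // k IH S G hk hG hgood.
case: (eqVneq S setT) => [eST|nS].
  have hG0 := hG; case: hG0 => HE _ _.
  exists G; split => //; first by rewrite -eST.
  by move=> i; apply: hgood; rewrite eST in_setT.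
have [j jS] : exists j, j \notin S.
  case: (pickP (fun j => j \notin S)) => [j jn|H]; first by exists j.
  by case/eqP: nS; apply/setP=> i; rewrite in_setT; move: (H i) => /= /negbFE.
have [v [vv Gv GJv gv]] := hstep S G nS hG hgood.
have [hG' E' c1 c2] := step hG jS vv Gv GJv.
have hk' : (#|~: (j |: S)| < k)%N.
  rewrite -ltnS (leq_trans _ hk) // ltnS; apply: proper_card.
  rewrite setCU; apply/properP; split; first exact: subsetIr.
  by exists j; rewrite ?inE ?eqxx.
have hg' : forall i, i \in j |: S -> good (col i (G + v *m delta_mx 0 j)).
  move=> i; rewrite in_setU1; case: (eqVneq i j) => [->|ij] /= iS; first by rewrite c1.
  by rewrite c2 //; apply: hgood.
have [H [HE HT Hg]] := IH _ _ hk' hG' hg'.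
exists H; split => //.
by rewrite -(ES_sub (subsetUr [set j] S)) mulmxA HE E'.
Qed.

End Compl.



Section Steps.
Variable C : numClosedFieldType.

Lemma normalize m (u : 'cV[C]_m) : u != 0 ->
  exists c : C, adj (c *: u) *m (c *: u) = 1%:M.
Proof.
move=> u0; set t := (adj u *m u) 0 0.
have t0 : t != 0 by apply/eqP => /dot_eq0 /eqP; rewrite (negPf u0).
have tge : 0 <= t by apply: dot_ge0.
set c := (sqrtC t)^-1.
have cc : c^* = c by apply: geC0_conj; rewrite invr_ge0 sqrtC_ge0.
exists c; rewrite hadjZ -scalemxAl -scalemxAr scalerA cc [adj u *m u]mx11_scalar -/t.
rewrite scale_scalar_mx; congr (_%:M).
by rewrite -expr2 /c exprVn sqrtCK mulVf.
Qed.

Lemma exists_orth m (B : 'M[C]_m) (r : 'I_m) : row r B = 0 ->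
  exists2 u : 'cV[C]_m, u != 0 & B *m u = 0.
Proof.
move=> Br.
have dB : \det B^T == 0.
  rewrite det_tr (expand_det_row _ r) big1 // => k _.
  by have := congr1 (fun A : 'M[C]_(1,m) => A 0 k) Br; rewrite !mxE => ->; rewrite mul0r.
have [w w0 wB] := det0P dB.
exists w^T; first by apply: contra w0 => /eqP/(congr1 trmx); rewrite trmxK trmx0 => ->.
by rewrite -[B]trmxK -trmx_mul wB trmx0.
Qed.

Variable N : nat.
Local Notation n := (N + N)%N.
Local Notation J := (@J C N).

Lemma hadjVV (G : 'M[C]_(n, N)) : adj (VV G) = col_mx (adj G) (G^T *m J).
Proof. by rewrite /VV hadjE /cj map_row_mx tr_row_mx -!/(cj _) -!hadjE hadj_sigma. Qed.

Lemma exists_j (S : {set 'I_N}) : S != setT -> exists j, j \notin S.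
Proof.
move=> nS; case: (pickP (fun j => j \notin S)) => [j jn|H]; first by exists j.
by case/eqP: nS; apply/setP=> i; rewrite in_setT; move: (H i) => /= /negbFE.
Qed.

Lemma orth_VV (S : {set 'I_N}) (G : 'M[C]_(n, N)) : S != setT -> okS S G ->
  exists2 u : 'cV[C]_n, u != 0 & adj (VV G) *m u = 0.
Proof.
move=> nS [HE _ _]; have [j jS] := exists_j nS.
apply: (@exists_orth _ _ (lshift N j)); apply/matrixP=> a b.
rewrite !mxE /VV -[lshift N j]/(unsplit (inl j)) unsplitK.
by have := congr1 (fun A : 'cV[C]_n => A b 0) (col_zero HE jS); rewrite !mxE => ->; rewrite rmorph0.
Qed.

Lemma VV0 (G : 'M[C]_(n, N)) (v : 'cV[C]_n) : adj (VV G) *m v = 0 ->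
  adj G *m v = 0 /\ G^T *m J *m v = 0.
Proof. by rewrite hadjVV mul_col_mx -col_mx0 => /eq_col_mx. Qed.

Lemma stepTrue (S : {set 'I_N}) (G : 'M[C]_(n, N)) : S != setT -> okS S G ->
  exists v : 'cV[C]_n, [/\ adj v *m v = 1%:M, adj G *m v = 0, G^T *m J *m v = 0 & True].
Proof.
move=> nS hG; have [u u0 Gu] := orth_VV nS hG.
have [c cu] := normalize u0.
exists (c *: u); have [] := VV0 (_ : adj (VV G) *m (c *: u) = 0).
  by rewrite -scalemxAr Gu scaler0.
by [].
Qed.

End Steps.



Section Eig.
Variable C : numClosedFieldType.

Lemma tstarE m p (M : 'M[C]_(m,p)) : map_mx Num.conj (M^T) = adj M.
Proof. by apply/matrixP=> i j; rewrite !mxE. Qed.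

Lemma colsP m p (A B : 'M[C]_(m,p)) : (forall i, col i A = col i B) -> A = B.
Proof. by move=> H; apply/matrixP => a b; have := congr1 (fun M : 'cV[C]_m => M a 0) (H b); rewrite !mxE. Qed.

Lemma col_mulmx m p q (A : 'M[C]_(m,p)) (B : 'M[C]_(p,q)) i : col i (A *m B) = A *m col i B.
Proof. by rewrite !colE mulmxA. Qed.

Lemma col_diag m p (A : 'M[C]_(m,p)) d i : col i (A *m diag_mx d) = d 0 i *: col i A.
Proof. by apply/matrixP=> a b; rewrite mul_mx_diag !mxE mulrC. Qed.

Lemma adj11 (M : 'M[C]_1) : adj M 0 0 = (M 0 0)^*.
Proof. by rewrite !mxE. Qed.

Lemma cj_diag m (d : 'rV[C]_m) : (forall i, (d 0 i)^* = d 0 i) -> cj (diag_mx d) = diag_mx d.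
Proof.
move=> H; apply/matrixP=> a b; rewrite !mxE; case: eqP => [->|]; last by rewrite !mulr0n rmorph0.
by rewrite !mulr1n H.
Qed.

Lemma adj_diag m (d : 'rV[C]_m) : (forall i, (d 0 i)^* = d 0 i) -> adj (diag_mx d) = diag_mx d.
Proof. by move=> H; rewrite hadjE cj_diag // tr_diag_mx. Qed.

Lemma cj_ES N (S : {set 'I_N}) : cj (ES C S) = ES C S.
Proof. by apply: cj_diag => i; rewrite !mxE rmorph_nat. Qed.

Lemma adj_ES N (S : {set 'I_N}) : adj (ES C S) = ES C S.
Proof. by apply: adj_diag => i; rewrite !mxE rmorph_nat. Qed.

Variable N : nat.
Local Notation n := (N + N)%N.
Local Notation J := (@J C N).

Definition goodE (A : 'M[C]_n) (v : 'cV[C]_n) := A *m v = (adj v *m A *m v) 0 0 *: v.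

Lemma okW (S : {set 'I_N}) (G : 'M[C]_(n, N)) : okS S G ->
  adj (VV G) *m VV G = block_mx (ES C S) 0 0 (ES C S).
Proof.
move=> [HE HA HS]; rewrite hadjVV /VV mul_col_row HA HS.
have H1 : adj G *m sigma G = 0.
  by rewrite /sigma hadjE mulmxA trJ mulmxN mulNmx -cjT -cjJ -!cjM HS cj0 oppr0.
have H2 : G^T *m J *m sigma G = ES C S.
  rewrite /sigma mulmxA -(mulmxA G^T) JJt mulmx1.
  have -> : G^T *m cj G = (adj G *m G)^T by rewrite trmx_mul hadjE trmxK.
  by rewrite HA tr_diag_mx.
by rewrite H1 H2.
Qed.

Lemma WE (S : {set 'I_N}) (G : 'M[C]_(n, N)) : okS S G ->
  VV G *m block_mx (ES C S) 0 0 (ES C S) = VV G.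
Proof.
move=> [HE _ _]; rewrite /VV mul_row_block !mulmx0 [_ + 0]addr0 [0 + _]add0r HE.
by rewrite -[ES C S]cj_ES -sigmaM HE.
Qed.

Lemma stepEig (A : 'M[C]_n) (S : {set 'I_N}) (G : 'M[C]_(n, N)) :
  adj A = A -> phi A = A -> S != setT -> okS S G -> (forall i, i \in S -> goodE A (col i G)) ->
  exists v : 'cV[C]_n, [/\ adj v *m v = 1%:M, adj G *m v = 0, G^T *m J *m v = 0 & goodE A v].
Proof.
move=> hA pA nS hG hgood; set W := VV G.
have hG0 := hG; case: hG0 => HE HA HS.
set mu := \row_i (adj (col i G) *m A *m col i G) 0 0.
have mur : forall i, (mu 0 i)^* = mu 0 i.
  move=> i; rewrite /mu mxE -adj11 !hadjM hadjK hA mulmxA //.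
have AG : A *m G = G *m diag_mx mu.
  apply: colsP => i; rewrite col_mulmx col_diag.
  case: (boolP (i \in S)) => iS.
    by have := hgood i iS; rewrite /goodE => ->; rewrite /mu (mxE _ _ 0 i).
  by rewrite (col_zero HE iS) mulmx0 scaler0.
set Dw := block_mx (diag_mx mu) 0 0 (diag_mx mu).
have AW : A *m W = W *m Dw.
  rewrite /W /VV mul_mx_row mul_row_block !mulmx0 [_ + 0]addr0 [0 + _]add0r Asigma //.
  by rewrite AG sigmaM cj_diag.
have aDw : adj Dw = Dw.
  by rewrite hadjE /Dw /cj map_block_mx -!/(cj _) cj_diag // !cj0 tr_block_mx !trmx0 tr_diag_mx.
have comm : A *m (W *m adj W) = W *m adj W *m A.
  have e : adj W *m A = Dw *m adj W by rewrite -[adj W *m A]hadjK hadjM hA hadjK AW hadjM aDw.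
  by rewrite mulmxA AW -!mulmxA e.
have [u u0 Wu] := orth_VV nS hG.
set M := spectralmx A.
have Mu : M *m adj M = 1%:M by rewrite -tstarE; apply/unitarymxP/spectral_unitarymx.
have Mu' : adj M *m M = 1%:M by apply: mulmx1C.
have Anorm : A \is normalmx by apply/normalmxP; rewrite tstarE hA.
have AM : A *m adj M = adj M *m diag_mx (spectral_diag A).
  have E := orthomx_spectralP Anorm.
  rewrite invmx_unitary ?spectral_unitarymx // tstarE -/M in E.
  by rewrite {1}E -!mulmxA Mu mulmx1.
set Q := 1%:M - W *m adj W.
have [k Yk] : exists k, col k (Q *m adj M) != 0.
  case: (pickP (fun k => col k (Q *m adj M) != 0)) => [k kk|H]; first by exists k.
  have Y0 : Q *m adj M = 0 by apply: colsP => k; move: (H k) => /negbFE/eqP ->; rewrite !colE mul0mx.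
  case/eqP: u0.
  have Qu : Q *m u = u by rewrite mulmxBl mul1mx -mulmxA Wu mulmx0 subr0.
  by rewrite -Qu -[u in Q *m u]mul1mx -Mu' !mulmxA Y0 !mul0mx.
set ck := col k (adj M); set p := Q *m ck.
have p0 : p != 0 by rewrite /p /ck -col_mulmx.
set dk := spectral_diag A 0 k.
have Ack : A *m ck = dk *: ck by rewrite /ck -col_mulmx AM col_diag.
have Ap : A *m p = dk *: p.
  rewrite /p mulmxA (_ : A *m Q = Q *m A); last by rewrite /Q mulmxBr mulmxBl mulmx1 mul1mx comm.
  by rewrite -mulmxA Ack -scalemxAr.
have adjB : adj (block_mx (ES C S) 0 0 (ES C S)) = block_mx (ES C S) 0 0 (ES C S).
  by rewrite hadjE /cj map_block_mx -!/(cj _) cj_ES !cj0 tr_block_mx !trmx0 tr_diag_mx.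
have e2 : block_mx (ES C S) 0 0 (ES C S) *m adj W = adj W.
  by have WE' : W *m block_mx (ES C S) 0 0 (ES C S) = W := WE hG; rewrite -{2}WE' hadjM adjB.
have Wp : adj W *m p = 0.
  by rewrite /p mulmxA /Q mulmxBr mulmx1 mulmxA (okW hG) e2 subrr mul0mx.
have [c cp] := normalize p0.
have Wcp : adj W *m (c *: p) = 0 by rewrite -scalemxAr Wp scaler0.
have [h1 h2] := VV0 Wcp.
exists (c *: p); split => //.
have Acp : A *m (c *: p) = dk *: (c *: p) by rewrite -scalemxAr Ap !scalerA mulrC.
rewrite /goodE Acp; congr (_ *: _).
by rewrite -mulmxA Acp -scalemxAr cp !mxE eqxx mulr1n mulr1.
Qed.

End Eig.



Section Main.
Variable C : numClosedFieldType.

Lemma quad_diag m (d : 'rV[C]_m) (w : 'cV[C]_m) : (forall k, 0 <= d 0 k) ->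
  0 <= (adj w *m diag_mx d *m w) 0 0.
Proof.
move=> hd; rewrite -mulmxA mul_diag_mx mxE; apply: sumr_ge0 => k _.
rewrite !mxE mulrCA; apply: mulr_ge0 => //; rewrite mulrC; exact: mul_conjC_ge0.
Qed.

Variable N : nat.
Local Notation n := (N + N)%N.
Local Notation J := (@J C N).

Lemma XtJX (X : 'M[C]_n) : phi X = X -> X^T *m J *m X = J *m (adj X *m X).
Proof.
move=> pX; have -> : X^T = J *m adj X *m J^T.
  by rewrite -{1}pX /phi !trmx_mul trmxK hadjE mulmxA.
by rewrite -(mulmxA _ J^T) JtJ mulmx1 mulmxA.
Qed.

Lemma phi_Ddiag (s : 'rV[C]_N) : (forall i, (s 0 i)^* = s 0 i) ->
  phi (diag_mx (row_mx s s)) = diag_mx (row_mx s s).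
Proof.
move=> hs; rewrite /phi cj_diag; last first.
  by move=> i; rewrite mxE; case: splitP => j _; rewrite hs.
rewrite diag_mx_row trJ /J opp_block_mx !oppr0 opprK !mulmx_block.
rewrite !mulmx0 !mul0mx !addr0 !add0r !mulmx1 !mul1mx !mulNmx !mulmxN !mulmx1.
by rewrite mul1mx oppr0 opprK.
Qed.


Lemma ES0 : ES C (set0 : {set 'I_N}) = 0.
Proof. by apply/matrixP=> i j; rewrite !mxE in_set0 mul0rn. Qed.

Lemma main_gen (X : 'M[C]_n) : adj X = sharp X ->
  exists U P : 'M[C]_n,
    [/\ unitary_mx U, psd_mx P, adj U = sharp U, adj P = sharp P & X = U *m P].
Proof.
move=> /fixE pX.
set A := adj X *m X.
have hA : adj A = A by rewrite /A hadjM hadjK.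
have pA : phi A = A by rewrite /A phiM phi_adj pX.
have ok0 : okS set0 (0 : 'M[C]_(n, N)).
  by split; rewrite ?mul0mx ?mulmx0 ?ES0 //; rewrite trmx0 !mul0mx.
have [F [_ [_ FF FJF] gF]] := complete (fun S G nS hG hg => stepEig hA pA nS hG hg) ok0
  (fun i (h : i \in set0) => ltac:(by rewrite in_set0 in h)).
rewrite ES_setT in FF.
set lam := \row_j (adj (col j F) *m A *m col j F) 0 0.
have AF : A *m F = F *m diag_mx lam.
  apply: colsP => i; rewrite col_mulmx col_diag.
  by have := gF i; rewrite /goodE => ->; rewrite /lam (mxE _ _ 0 i).
have lam_ge0 : forall j, 0 <= lam 0 j.
  move=> j; rewrite /lam (mxE _ _ 0 j) /A mulmxA -hadjM -mulmxA; exact: dot_ge0.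
have lamr : forall j, (lam 0 j)^* = lam 0 j by move=> j; apply: geC0_conj.
have FAF : adj F *m A *m F = diag_mx lam by rewrite -mulmxA AF mulmxA FF mul1mx.
clearbody lam.
set V := VV F.
have VV1 : adj V *m V = 1%:M.
  by rewrite /V (okW (And3 (_ : F *m ES C setT = F) _ _)) ?ES_setT ?mulmx1 // -scalar_mx_block.
have VV2 : V *m adj V = 1%:M by apply: mulmx1C.
set s := \row_j sqrtC (lam 0 j).
have s_ge0 : forall j, 0 <= s 0 j by move=> j; rewrite mxE sqrtC_ge0.
have sr : forall j, (s 0 j)^* = s 0 j by move=> j; apply: geC0_conj.
have s2 : forall j, s 0 j ^+ 2 = lam 0 j by move=> j; rewrite mxE sqrtCK.
have s0 : forall j, (s 0 j == 0) = (lam 0 j == 0) by move=> j; rewrite mxE sqrtC_eq0.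
clearbody s.
set Ds := diag_mx (row_mx s s).
have Ds_ge0 : forall k, 0 <= row_mx s s 0 k by move=> k; rewrite mxE; case: splitP.
have Dsr : forall k, (row_mx s s 0 k)^* = row_mx s s 0 k by move=> k; apply: geC0_conj.
set P := V *m Ds *m adj V.
set Sset := [set j | lam 0 j != 0].
set Dinv := diag_mx (\row_j (s 0 j)^-1).
have Dinvr : adj Dinv = Dinv.
  by apply: adj_diag => j; rewrite mxE fmorphV; congr (_^-1); exact: sr.
set G0 := X *m F *m Dinv.
have okG0 : okS Sset G0.
  split.
  - rewrite /G0 -mulmxA mulmx_diag; congr (_ *m _); congr diag_mx; apply/rowP=> b; rewrite !mxE inE.
    case: (eqVneq (lam 0 b) 0) => [l0|l0]; last by rewrite mulr1.
    by move: (s0 b); rewrite l0 eqxx => /eqP ->; rewrite invr0 mul0r.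
  - have -> : adj G0 *m G0 = Dinv *m (adj F *m A *m F) *m Dinv by rewrite /G0 !hadjM Dinvr /A !mulmxA.
    rewrite FAF !mulmx_diag; congr diag_mx; apply/rowP=> b; rewrite !mxE inE.
    case: (eqVneq (lam 0 b) 0) => [->|l0]; first by rewrite mulr0 mul0r.
    have sb : s 0 b != 0 by rewrite s0.
    by rewrite -s2 expr2 mulrA mulVf // mul1r mulfV.
  - have -> : G0^T *m J *m G0 = Dinv^T *m (F^T *m (X^T *m J *m X) *m F) *m Dinv.
      by rewrite /G0 !trmx_mul !mulmxA.
    rewrite XtJX // !mulmxA -(mulmxA (Dinv^T *m F^T *m J) (adj X) X) -/A -(mulmxA (Dinv^T *m F^T *m J) A F) AF mulmxA.
    by rewrite -(mulmxA Dinv^T F^T J) -(mulmxA Dinv^T (F^T *m J) F) FJF mulmx0 !mul0mx.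
have [H [HE [_ HH HJH] _]] := complete (good := fun _ => True) (fun S G nS hG _ => @stepTrue C N S G nS hG) okG0 (fun i _ => I).
rewrite ES_setT in HH.
set U := VV H *m adj V.
have XFE : X *m F *m ES C Sset = X *m F.
  apply: colsP => j; rewrite col_diag (mxE _ _ 0 j) inE.
  case: (eqVneq (lam 0 j) 0) => [l0|l0] /=; last by rewrite scale1r.
  rewrite scale0r; apply/esym/dot_eq0.
  have e : adj (X *m F) *m (X *m F) = diag_mx lam by rewrite hadjM -FAF /A !mulmxA.
  rewrite !colE hadjM mulmxA -(mulmxA (adj (delta_mx j 0))) e hadj_delta -rowE -colE.
  by rewrite !mxE eqxx mulr1n l0.
have DinvS : Dinv *m diag_mx s = ES C Sset.
  rewrite mulmx_diag; congr diag_mx; apply/rowP=> b; rewrite !mxE inE.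
  case: (eqVneq (lam 0 b) 0) => [l0|l0] /=.
    by move: (s0 b); rewrite l0 eqxx => /eqP ->; rewrite mulr0.
  by rewrite mulVf // s0.
have ESs : ES C Sset *m diag_mx s = diag_mx s.
  rewrite mulmx_diag; congr diag_mx; apply/rowP=> b; rewrite !mxE inE.
  case: (eqVneq (lam 0 b) 0) => [l0|l0] /=; last by rewrite mul1r.
  by move: (s0 b); rewrite l0 eqxx => /eqP ->; rewrite mulr0.
have XF : X *m F = H *m diag_mx s.
  by rewrite -ESs mulmxA HE /G0 -mulmxA DinvS XFE.
have okH : okS setT H by split; rewrite ?ES_setT ?(mulmx1 H) //.
have hVH : adj (VV H) *m VV H = 1%:M by rewrite (okW okH) ES_setT -scalar_mx_block.
have Dsa : adj Ds = Ds by apply: adj_diag.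
exists U, P; split.
- have h1 : adj U *m U = 1%:M.
    by rewrite /U hadjM hadjK mulmxA -(mulmxA V) hVH mulmx1 VV2.
  by split => //; apply: mulmx1C.
- split; first by rewrite /P !hadjM hadjK Dsa mulmxA.
  move=> v; have := quad_diag (adj V *m v) Ds_ge0.
  by rewrite hadjM hadjK /P !mulmxA.
- by apply/fixE; rewrite /U phiM phiVV phi_adj phiVV.
- by apply/fixE; rewrite /P !phiM phiVV phi_Ddiag // phi_adj phiVV.
- rewrite /U /P !mulmxA -(mulmxA (VV H) (adj V) V) VV1 mulmx1.
  have -> : VV H *m Ds = X *m V.
    rewrite /VV /Ds diag_mx_row mul_row_block !mulmx0 [_ + 0]addr0 [0 + _]add0r.
    rewrite -XF (_ : sigma H *m diag_mx s = sigma (H *m diag_mx s)); last by rewrite sigmaM cj_diag.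
    by rewrite -XF -Asigma // mul_mx_row.
  by rewrite -mulmxA VV2 mulmx1.
Qed.

End Main.

Theorem mainTheorem4 (R : realType) (N : nat) (X : 'M[R[i]]_(N + N)) :
  adj X = sharp X ->
  exists U P : 'M[R[i]]_(N + N),
    [/\ unitary_mx U, psd_mx P, adj U = sharp U, adj P = sharp P & X = U *m P].
Proof. exact: main_gen. Qed.
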